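(* For all integers $L\ge 0$ and $n\ge 1$, $$S_L(n+3,n)=\frac{n(n+1)(n+2)(n+3)}{3\cdot 2^4}\left[\frac{(n+3)!}{3}\right]^{L}\left(n^2\left(\frac{3}{8}\right)^{L}+n\left(\frac{1}{4^{L-1}}-\frac{3^{L+1}}{8^L}\right)+\frac{2+2\cdot 3^L}{8^L}-\frac{1}{4^{L-1}}\right).$$ In particular, $S_0(n+3,n)=\frac{1}{48}n^2(n+1)^2(n+2)(n+3)$.
   Context: For an integer $L\ge 0$ let ${}_0F_L(z)=\sum_{n=0}^{\infty}\frac{z^n}{(n!)^{L+1}}$. Define the numbers $S_L(n,l)$ ($n,l\ge 0$) by the formal power series identities $\frac{({}_0F_L(z)-1)^l}{l!}=\sum_{n\ge l}\frac{S_L(n,l)}{(n!)^{L+1}}z^n$ for each $l\ge 0$. In particular $S_0(n,l)$ are the Stirling numbers of the second kind. *)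

(* Defs.v *)
From HB Require Import structures.
From mathcomp Require Import all_boot all_order all_algebra.
Set Implicit Arguments. Unset Strict Implicit. Unset Printing Implicit Defensive.
Import Order.TTheory GRing.Theory Num.Theory.
Local Open Scope ring_scope.

(* Truncation of 0F_L(z) - 1 = sum_{k>=1} z^k/(k!)^(L+1) to degree <= N,
   as a polynomial with rational coefficients. *)
Definition F0Lm1_trunc (L N : nat) : {poly rat} :=
  \poly_(k < N.+1) (if k == 0%N then 0 else (((k`!) ^ (L.+1))%:R)^-1).

(* S_L(n,l): defined by ((0F_L(z)-1)^l / l!) = sum_n S_L(n,l)/(n!)^(L+1) z^n.
   The coefficient of z^n of the power series (0F_L - 1)^l only depends on the
   terms of degree <= n of 0F_L - 1, hence equals the n-th coefficient of the
   l-th power of the truncation. *)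
Definition S_L (L n l : nat) : rat :=
  (((n`!) ^ (L.+1))%:R) * ((l`!)%:R)^-1 * ((F0Lm1_trunc L n) ^+ l)`_n.

(* Main.v *)
From HB Require Import structures.
From mathcomp Require Import all_boot all_order all_algebra ring zify.
Require Import Defs.
Import Order.TTheory GRing.Theory Num.Theory.
Local Open Scope ring_scope.

Lemma coef_pow (q : {poly rat}) (n : nat) : q`_0 = 1 ->
  [/\ (q ^+ n)`_0 = 1, (q ^+ n)`_1 = n%:R * q`_1,
      (q ^+ n)`_2 = n%:R * q`_2 + n%:R * (n%:R - 1) / 2 * q`_1 ^+ 2
    & (q ^+ n)`_3 = n%:R * q`_3 + n%:R * (n%:R - 1) * q`_1 * q`_2
        + n%:R * (n%:R - 1) * (n%:R - 2) / 6 * q`_1 ^+ 3].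
Proof.
move=> q0; elim: n => [|n [h0 h1 h2 h3]].
  by rewrite expr0 !coefE /= !mul0r !add0r.
rewrite exprSr !coefM !big_ord_recr !big_ord0 /= !add0r h0 h1 h2 h3 q0 !subn0 /=.
rewrite -[n.+1]addn1 natrD.
split; try field.
all: done.
Qed.

Lemma S_L_formula (L n : nat) (hn : (1 <= n)%N) :
  let a k := (((k`!) ^ (L.+1))%:R : rat)^-1 in
  S_L L (n + 3) n = (((n + 3)`! ^ L.+1)%:R) * ((n`!)%:R)^-1 *
   (n%:R * a 4%N + n%:R * (n%:R - 1) * a 2%N * a 3%N
        + n%:R * (n%:R - 1) * (n%:R - 2) / 6 * a 2%N ^+ 3).
Proof.
move=> a; rewrite /S_L.
set q : {poly rat} := \poly_(k < n + 3) a k.+1.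
have -> : F0Lm1_trunc L (n + 3) = q * 'X.
  apply/polyP => i; rewrite coefMX !coef_poly.
  by case: i => [|i] //=; rewrite ltnS.
rewrite exprMn coefMXn ltnNge leq_addr /= addKn.
have q0 : q`_0 = 1 by rewrite coef_poly addn3 /= /a factS fact0 muln1 exp1n invr1.
have [_ _ _ ->] := coef_pow q n q0.
have hq : forall j, (j < 4)%N -> q`_j = a j.+1.
  by move=> j hj; rewrite coef_poly (_ : (j < n + 3)%N = true) //; lia.
rewrite !hq //.
Qed.

Theorem mainTheorem6 (L n : nat) (hn : (1 <= n)%N) :
  S_L L (n + 3) n =
    ((n * (n + 1) * (n + 2) * (n + 3))%N%:R / (3 * 2 ^+ 4)) *
    (((n + 3)`!)%:R / 3) ^+ L *
    ((n%:R) ^+ 2 * (3 / 8) ^+ L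
     + n%:R * (1 / (4 : rat) ^ (L%:Z - 1) - 3 ^+ L.+1 / 8 ^+ L)
     + (2 + 2 * 3 ^+ L) / 8 ^+ L
     - 1 / (4 : rat) ^ (L%:Z - 1))
  /\
  S_L 0 (n + 3) n =
    1 / 48 * (n%:R) ^+ 2 * (n.+1%:R) ^+ 2 * (n.+2)%:R * (n.+3)%:R.
Proof.
have gen : forall L, S_L L (n + 3) n =
    ((n * (n + 1) * (n + 2) * (n + 3))%N%:R / (3 * 2 ^+ 4)) *
    (((n + 3)`!)%:R / 3) ^+ L *
    ((n%:R) ^+ 2 * (3 / 8) ^+ L
     + n%:R * (1 / (4 : rat) ^ (L%:Z - 1) - 3 ^+ L.+1 / 8 ^+ L)
     + (2 + 2 * 3 ^+ L) / 8 ^+ L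
     - 1 / (4 : rat) ^ (L%:Z - 1)).
  move=> {}L.
  rewrite (@S_L_formula L n hn) /=.
  rewrite !natrX.
  have -> : (2`!)%:R = 2 :> rat by [].
  have -> : (3`!)%:R = 2 * 3 :> rat by [].
  have -> : (4`!)%:R = 2 ^+ 3 * 3 :> rat by [].
  rewrite expfzDr // exprN1 -exprnP.
  have -> : (4 : rat) = 2 ^+ 2 by [].
  have -> : (8 : rat) = 2 ^+ 3 by [].
  rewrite !exprMn !exprVn !(exprAC _ _ L) !exprS.
  have h2 : (2 : rat) ^+ L != 0 by rewrite expf_neq0.
  have h3 : (3 : rat) ^+ L != 0 by rewrite expf_neq0.
  have hf : (n`!)%:R != 0 :> rat by rewrite pnatr_eq0 -lt0n fact_gt0.
  move: h2 h3 hf.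
  set t2 := (2 : rat) ^+ L; set t3 := (3 : rat) ^+ L.
  set F := ((n + 3)`!)%:R ^+ L.
  have -> : ((n + 3)`! = (n + 1) * (n + 2) * (n + 3) * n`!)%N.
    rewrite addn3 !factS -addn3 -addn2 -addn1; ring.
  rewrite !natrM !natrD.
  move=> h2 h3 hf.
  clearbody t2 t3 F; move: (n`!%:R) (n%:R) h2 h3 hf => nf x h2 h3 hf.
  field.
  by rewrite h2 h3 hf.
split; first exact: gen.
rewrite (@S_L_formula 0 n hn) /=.
rewrite !natrX !expr1.
have -> : (2`!)%:R = 2 :> rat by [].
have -> : (3`!)%:R = 6 :> rat by [].
have -> : (4`!)%:R = 24 :> rat by [].
have -> : ((n + 3)`! = (n + 1) * (n + 2) * (n + 3) * n`!)%N.
  rewrite addn3 !factS -addn3 -addn2 -addn1; ring.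
have hf : n`!%:R != 0 :> rat by rewrite pnatr_eq0 -lt0n fact_gt0.
rewrite -[n.+3]addn3 -[n.+2]addn2 -[n.+1]addn1 !natrM !natrD.
move: (n`!%:R) (n%:R) hf => nf x hf.
field.
by rewrite hf.
Qed.
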